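(* Let $G=(V,E)$ be a finite directed graph and $v_g\in V$ such that every vertex $v\in V$ has a directed path to $v_g$. Let $E'$ be $E$ with all edges out of $v_g$ removed, and build the environment $\mathcal{G}=(\mathcal{S},\mathcal{E})$ with $\mathcal{S}=V\cup\{s_f\}$ ($s_f$ a new vertex), $s_0:=v_g$, and $\mathcal{E}=\{(w\to u):(u\to w)\in E'\}\cup\{(s\to s_f): s\in V\}$. Then $\mathcal{G}$ is a GFlowNet environment with terminal set $\mathcal{X}=V$, and in $\mathcal{G}$ the quantity $\ell(v)$ equals the distance $d_G(v,v_g)$ from $v$ to $v_g$ in $G$. Let $\mathcal{R}:V\to(0,\infty)$ be arbitrary with $\mathcal{Z}=\sum_{v\in V}\mathcal{R}(v)$, and let $P_B$ be a backward policy on $\mathcal{G}$ with $\mathbb{E}[n_\tau]<\infty$ that minimizes $\mathbb{E}[n_\tau]$ among all backward policies satisfying $P_B(v\mid s_f)=\mathcal{R}(v)/\mathcal{Z}$ for all $v\in V$ and having finite $\mathbb{E}[n_\tau]$. Then for every $v\in V$, every sequence $v=u_0,u_1,\dots,u_k=v_g$ with $u_1,\dots,u_{k-1}\ne v_g$ and $\prod_{i=1}^{k}P_B(u_i\mid u_{i-1})>0$ is a shortest directed path from $v$ to $v_g$ in $G$ (i.e. each $(u_{i-1}\to u_i)\in E$ and $k=d_G(v,v_g)$). In particular, for uniform reward $\mathcal{R}\equiv1$ the minimal value is $\mathbb{E}[n_\tau]=\frac{1}{|V|}\sum_{v\in V}d_G(v,v_g)$.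
   Context: A GFlowNet environment is a finite directed graph $\mathcal{G}=(\mathcal{S},\mathcal{E})$ (possibly containing cycles) with a distinguished initial state $s_0$ having no incoming edges and a distinguished sink state $s_f$ having no outgoing edges, such that every state $s\in\mathcal{S}$ is reachable by a directed path from $s_0$ and $s_f$ is reachable by a directed path from $s$. A trajectory is a finite sequence $\tau=(s_0\to s_1\to\dots\to s_{n_\tau}\to s_f)$ with each consecutive pair an edge of $\mathcal{E}$ and $s_1,\dots,s_{n_\tau}\notin\{s_0,s_f\}$; $n_\tau\ge0$ is its length. The terminal states are $\mathcal{X}=\{s:(s\to s_f)\in\mathcal{E}\}$. For $s\in\mathcal{S}$, $\ell(s)$ denotes the number of edges in a shortest directed path from $s_0$ to $s$ in $\mathcal{G}$. A backward policy $P_B$ assigns to each $s'\in\mathcal{S}\setminus\{s_0\}$ a probability distribution $P_B(\cdot\mid s')$ on its parents $\{s:(s\to s')\in\mathcal{E}\}$ (zero probabilities allowed). It defines a Markov chain $X_0=s_f$, $\Pr[X_t=s\mid X_{t-1}=s']=P_B(s\mid s')$, with $s_0$ absorbing; letting $T$ be the hitting time of $s_0$, set $n_\tau=T-1$ (with $n_\tau=\infty$ if $s_0$ is never hit), and $\mathbb{E}[n_\tau]$ is its expectation. $d_G(v,v_g)$ is the number of edges in a shortest directed path from $v$ to $v_g$ in $G$. *)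

(* Defs.v *)
From HB Require Import structures.
From mathcomp Require Import all_boot all_order all_algebra.
From mathcomp Require Import all_classical all_reals all_analysis.
Set Implicit Arguments. Unset Strict Implicit. Unset Printing Implicit Defensive.
Import Order.TTheory GRing.Theory Num.Theory.
Local Open Scope ring_scope.

Section Graphs.
Variable T : finType.
Variable e : rel T.

Definition walk_len (x y : T) (n : nat) : bool :=
  [exists p : n.-tuple T, path e x p && (last x p == y)].

Lemma connect_walk_len x y : connect e x y -> exists n, walk_len x y n.
Proof.
case/connectP => p pth ->; exists (size p); apply/existsP.
by exists (in_tuple p); rewrite /= pth eqxx.
Qed.

(* number of edges of a shortest directed path from x to y
   (convention: 0 if y is unreachable from x; never used in that case) *)
Definition dist (x y : T) : nat :=
  match @idP (connect e x y) with
  | ReflectT H => ex_minn (connect_walk_len H)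
  | ReflectF _ => 0
  end.
End Graphs.

Definition gfn_env (S : finType) (E : rel S) (s0 sf : S) : Prop :=
  [/\ s0 != sf,
      forall s, ~~ E s s0,
      forall s, ~~ E sf s,
      forall s, connect E s0 s &
      forall s, connect E s sf].

Definition terminals (S : finType) (E : rel S) (sf : S) : {set S} :=
  [set s | E s sf].

Definition ell (S : finType) (E : rel S) (s0 s : S) : nat := dist E s0 s.

(* P s s' stands for P_B(s | s').  A backward policy gives, for every s' <> s0,
   a probability distribution supported on the parents of s'; probabilities
   of non-parents are 0 (in particular P_B(. | s0) = 0 since s0 has no parents). *)
Definition backward_policy (R : realType) (S : finType) (E : rel S) (s0 : S)
  (P : S -> S -> R) : Prop :=
  [/\ forall s s', 0 <= P s s',
      forall s s', ~~ E s s' -> P s s' = 0 &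
      forall s', s' != s0 -> \sum_(s : S) P s s' = 1].

Fixpoint path_weight (R : realType) (S : finType) (P : S -> S -> R) (x : S)
  (p : seq S) : R :=
  match p with
  | [::] => 1
  | y :: q => P y x * path_weight P y q
  end.

(* Pr[T = t] for the chain X_0 = sf, X_i ~ P_B(. | X_{i-1}), T = hitting time of s0 *)
Definition hit_prob (R : realType) (S : finType) (P : S -> S -> R) (s0 sf : S)
  (t : nat) : R :=
  \sum_(p : t.-tuple S | (last sf p == s0) && (s0 \notin take t.-1 p))
     path_weight P sf p.

(* E[n_tau] with n_tau = T - 1 (= +oo when s0 is never hit):
   +oo if Pr[T < oo] < 1, otherwise sum_t (t - 1) Pr[T = t]. *)
Definition expected_ntau (R : realType) (S : finType) (P : S -> S -> R)
  (s0 sf : S) : \bar R :=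
  if ((\sum_(t <oo) (hit_prob P s0 sf t)%:E)%E == 1%E)
  then (\sum_(t <oo) ((t.-1)%:R * hit_prob P s0 sf t)%:E)%E
  else (+oo)%E.

(* The environment built from (G = (T, e), v_g):  S = option T, None = s_f,
   Some v = v.  Edge w -> u iff (u -> w) in E' (E minus edges out of v_g),
   plus s -> s_f for every s in V. *)
Definition env_rel (T : finType) (e : rel T) (vg : T) : rel (option T) :=
  fun s s' =>
    match s, s' with
    | Some w, Some u => e u w && (u != vg)
    | Some _, None => true
    | None, _ => false
    end.

Definition optimal_policy (R : realType) (T : finType) (e : rel T) (vg : T)
  (Rw : T -> R) (P : option T -> option T -> R) : Prop :=
  let Z := \sum_(v : T) Rw v in
  let admissible (Q : option T -> option T -> R) :=
    [/\ backward_policy (env_rel e vg) (Some vg) Q,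
        forall v, Q (Some v) None = Rw v / Z &
        (expected_ntau Q (Some vg) None < +oo)%E] in
  admissible P /\
  forall Q, admissible Q ->
    (expected_ntau P (Some vg) None <= expected_ntau Q (Some vg) None)%E.

(* Main.v *)
Require Import Defs.
From HB Require Import structures.
From mathcomp Require Import all_boot all_order all_algebra.
From mathcomp Require Import all_classical all_reals all_analysis.
From mathcomp Require Import zify ring lra.
Import Order.TTheory GRing.Theory Num.Theory.
Set Implicit Arguments. Unset Strict Implicit. Unset Printing Implicit Defensive.
Local Open Scope ring_scope.

Section DistLemmas.
Variable T : finType.
Variable e : rel T.

Lemma walk_lenP x y n :
  reflect (exists p : seq T, [/\ size p = n, path e x p & last x p = y])
          (walk_len e x y n).
Proof.
apply: (iffP existsP) => [[p /andP[pp /eqP lp]]|[p [sp pp lp]]].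
  by exists (val p); rewrite size_tuple.
have sp' : size p == n by rewrite sp.
by exists (Tuple sp'); rewrite /= pp lp eqxx.
Qed.

Lemma walk_connect x y n : walk_len e x y n -> connect e x y.
Proof. by case/walk_lenP => p [_ pp lp]; apply/connectP; exists p. Qed.

Lemma dist_min x y n : walk_len e x y n -> (dist e x y <= n)%N.
Proof.
rewrite /dist; destruct (@idP (connect e x y)) as [H|H] => // W.
by case: ex_minnP => m _ Hm; apply: Hm.
Qed.

Lemma dist_walk x y : connect e x y -> walk_len e x y (dist e x y).
Proof.
rewrite /dist => c; destruct (@idP (connect e x y)) as [H|H] => //.
by case: ex_minnP.
Qed.

Lemma dist0 x : dist e x x = 0%N.
Proof.
apply/eqP; rewrite -leqn0; apply: dist_min; apply/walk_lenP; by exists [::].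
Qed.

Lemma dist_eq0 x y : connect e x y -> dist e x y = 0%N -> x = y.
Proof.
move=> c d0; have := dist_walk c; rewrite d0 => /walk_lenP[p [sp _ lp]].
by move: sp lp; case: p.
Qed.

Lemma dist_path x p : path e x p -> (dist e x (last x p) <= size p)%N.
Proof. by move=> pp; apply: dist_min; apply/walk_lenP; exists p. Qed.

Lemma dist_step x y z : e x y -> connect e y z -> (dist e x z <= (dist e y z).+1)%N.
Proof.
move=> exy c; have /walk_lenP[p [sp pp lp]] := dist_walk c.
apply: dist_min; apply/walk_lenP; exists (y :: p); by rewrite /= exy pp sp lp.
Qed.

Lemma dist_next x z : connect e x z -> x != z ->
  exists y, e x y /\ dist e y z = (dist e x z).-1.
Proof.
move=> c xz; have := dist_walk c; move/walk_lenP => [p [sp pp lp]].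
case: p sp pp lp => [|y q] sp pp lp; first by move: lp xz => /= ->; rewrite eqxx.
move: pp => /= /andP[exy pq].
have cy : connect e y z by apply/connectP; exists q.
have h1 := dist_step exy cy.
have h2 : (dist e y z <= size q)%N by rewrite -lp; apply: dist_path.
exists y; split => //; move: sp => /= sp; lia.
Qed.

End DistLemmas.

Section TupleSum.
Variables (R : realType) (S : finType).

Lemma sum_tuple_cons t (F : seq S -> R) :
  \sum_(p : t.+1.-tuple S) F p = \sum_(y : S) \sum_(q : t.-tuple S) F (y :: q).
Proof.
rewrite pair_big /=.
rewrite (reindex (fun yq : S * t.-tuple S => [tuple of yq.1 :: yq.2])) /=.
  by apply: eq_bigr.
exists (fun p : t.+1.-tuple S => (thead p, [tuple of behead p])).
  by move=> [y q] _ /=; congr pair; apply: val_inj.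
by move=> p _; apply: val_inj => /=; rewrite [in RHS](tuple_eta p).
Qed.

Lemma sum_tuple0 (F : seq S -> R) : \sum_(p : 0.-tuple S) F p = F [::].
Proof. by rewrite (big_pred1 [tuple]) // => p; apply/esym/eqP/tuple0. Qed.

Lemma sum_option (F : option S -> R) (x0 : S) :
  \sum_(y : option S) F y = F None + \sum_(v : S) F (Some v).
Proof.
rewrite (bigD1 None) //=; congr (_ + _).
rewrite (reindex (@Some S)) /=.
  by apply: eq_bigl.
exists (fun y => odflt x0 y) => // [[v|]] //.
Qed.

End TupleSum.

Section Hit.
Variables (R : realType) (S : finType) (P : S -> S -> R) (s0 : S).

Fixpoint kk (t : nat) (x : S) : R :=
  match t with
  | 0%N => (x == s0)%:R
  | t'.+1 => if x == s0 then 0 else \sum_(y : S) P y x * kk t' y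
  end.

Hypothesis P0 : forall y, P y s0 = 0.

Lemma Hk t x :
  \sum_(p : t.-tuple S | (last x p == s0) && (s0 \notin take t.-1 p))
     path_weight P x p = kk t x.
Proof.
elim: t x => [|t IH] x.
  rewrite big_mkcond /= (sum_tuple0 (fun p : seq S =>
     if (last x p == s0) && (s0 \notin take 0 p) then path_weight P x p else 0)).
  by rewrite /= andbT; case: (x == s0).
rewrite big_mkcond /= (sum_tuple_cons _ (fun p : seq S =>
     if (last x p == s0) && (s0 \notin take t p) then path_weight P x p else 0)).
case: (eqVneq x s0) => [->|xs0].
  rewrite big1 // => y _; rewrite big1 // => q _.
  by case: ifP => // _ /=; rewrite P0 mul0r.
apply: eq_bigr => y _ /=.
case: t IH => [|t] IH.
  rewrite (sum_tuple0 (fun p : seq S =>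
     if (last y p == s0) && (s0 \notin take 0 (y :: p)) then P y x * path_weight P y p else 0)).
  by rewrite /= andbT; case: (y == s0); rewrite ?mulr1 ?mulr0.
case: (eqVneq y s0) => [->|ys0].
  rewrite /= eqxx mulr0 big1 // => q _.
  by rewrite /= in_cons eqxx /= andbF.
rewrite -IH big_distrr /= [RHS]big_mkcond; apply: eq_bigr => q _.
rewrite in_cons (eq_sym s0 y) (negbTE ys0) /=.
by case: ifP.
Qed.

Hypothesis Pge0 : forall a b, 0 <= P a b.
Hypothesis Psum : forall x, x != s0 -> \sum_(y : S) P y x = 1.

Lemma kk_ge0 t x : 0 <= kk t x.
Proof.
elim: t x => [|t IH] x /=; first by case: (x == s0).
case: ifP => // _; apply: sumr_ge0 => y _; exact: mulr_ge0.
Qed.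

Lemma kk_sum_le1 N x : \sum_(t < N) kk t x <= 1.
Proof.
elim: N x => [|N IH] x; first by rewrite big_ord0.
rewrite big_ord_recl /=.
case xs0: (x == s0).
  by rewrite big1 ?addr0.
rewrite add0r.
have {}xs0 : x != s0 by rewrite xs0.
rewrite exchange_big /=.
rewrite -(Psum xs0); apply: ler_sum => y _.
rewrite -mulr_sumr; apply: ler_piMr => //.
Qed.

Lemma path_weight_ge0 x p : 0 <= path_weight P x p.
Proof. elim: p x => [|y p IH] x /=; [exact: ler01 | exact: mulr_ge0]. Qed.

End Hit.

Section Env.
Variables (T : finType) (e : rel T) (vg : T).
Hypothesis Hreach : forall v : T, connect e v vg.
Local Notation E := (env_rel e vg).

Lemma env_reach_walk n v : dist e v vg = n -> walk_len E (Some vg) (Some v) n.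
Proof.
elim: n v => [|n IH] v dv.
  have -> := dist_eq0 (Hreach v) dv.
  by apply/walk_lenP; exists [::].
have vvg : v != vg by apply/eqP => vv; move: dv; rewrite vv dist0.
have [w [evw dw]] := dist_next (Hreach v) vvg.
rewrite dv /= in dw.
have /walk_lenP[p [sp pp lp]] := IH w dw.
apply/walk_lenP; exists (rcons p (Some v)).
by rewrite size_rcons sp rcons_path pp lp /= evw vvg last_rcons.
Qed.

Lemma env_walk_back p a u :
  path E (Some a) p -> last (Some a) p = Some u -> walk_len e u a (size p).
Proof.
elim: p a => [|[b|] q IH] a /=.
  by move=> _ [->]; apply/walk_lenP; exists [::].
  move=> /andP[/andP[eba bvg] pq] lq.
  have /walk_lenP[r [sr pr lr]] := IH b pq lq.
  apply/walk_lenP; exists (rcons r a).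
  by rewrite size_rcons sr rcons_path pr lr eba last_rcons.
by clear IH; case: q.
Qed.

Lemma ell_eq v : dist E (Some vg) (Some v) = dist e v vg.
Proof.
have W := env_reach_walk (erefl (dist e v vg)).
apply/eqP; rewrite eqn_leq dist_min //=.
have /walk_lenP[p [sp pp lp]] := dist_walk (walk_connect W).
rewrite -sp; apply: dist_min; exact: env_walk_back pp lp.
Qed.

Lemma env_gfn : gfn_env E (Some vg) None /\ terminals E None = [set Some v | v in T].
Proof.
split.
  split => //.
  - by case => // w /=; rewrite eqxx andbF.
  - case => [v|]; last exact: connect1.
    exact: walk_connect (env_reach_walk (erefl _)).
  - by case => [v|] //; apply: connect1.
apply/setP => -[v|]; rewrite !inE /=.
  by apply/esym/imsetP; exists v.
by apply/esym/imsetP => -[v].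
Qed.

Section Policy.
Variables (R : realType) (P : option T -> option T -> R).
Hypothesis HP : backward_policy E (Some vg) P.

Lemma P_s0 y : P y (Some vg) = 0.
Proof. case: HP => _ H _; apply: H; case: y => //= w; by rewrite eqxx andbF. Qed.

Lemma P_ge0 a b : 0 <= P a b.
Proof. by case: HP. Qed.

Lemma P_edge a b : P a b != 0 -> E a b.
Proof. case: HP => _ H _ pab; apply/negPn/negP => /H; exact/eqP. Qed.

Lemma kk_dist t v : kk P (Some vg) t (Some v) != 0 -> (dist e v vg <= t)%N.
Proof.
elim: t v => [|t IH] v /=.
  by case: (eqVneq v vg) => [->|nv]; [rewrite dist0 | rewrite (inj_eq (@Some_inj _)) (negbTE nv) eqxx].
case: ifP => [_|vvg ne]; first by rewrite eqxx.
have [y _ hy] : exists2 y, true & P y (Some v) * kk P (Some vg) t y != 0.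
  apply/exists_inP; apply: contraT; rewrite negb_exists_in => /forall_inP H.
  move: ne; rewrite big1 ?eqxx // => y _; apply/eqP; move: (H y isT); by rewrite negbK.
have Py : P y (Some v) != 0 by apply: contra hy => /eqP ->; rewrite mul0r.
have ky : kk P (Some vg) t y != 0 by apply: contra hy => /eqP ->; rewrite mulr0.
have := P_edge Py; case: y Py ky hy => [w|] //= _ ky _ /andP[evw _].
have := IH w ky; have := dist_step evw (Hreach w); lia.
Qed.

Lemma weight_kk v p :
  0 < path_weight P (Some v) (map Some p) -> last v p = vg ->
  path e v p /\ path_weight P (Some v) (map Some p) <= kk P (Some vg) (size p) (Some v).
Proof.
elim: p v => [|y q IH] v /=.
  by move=> _ ->; rewrite eqxx.
move=> pos lq.
have w0 := path_weight_ge0 P_ge0 (Some y) (map Some q).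
have p0 := P_ge0 (Some y) (Some v).
have Pne : P (Some y) (Some v) != 0 by apply: contraTneq pos => ->; rewrite mul0r ltxx.
have wpos : 0 < path_weight P (Some y) (map Some q).
  rewrite lt_def w0 andbT; apply: contraTneq pos => ->; rewrite mulr0 ltxx //.
have /andP[evy vvg] := P_edge Pne.
have [pq le] := IH y wpos lq.
split; first by rewrite evy pq.

have -> : (Some v == Some vg) = false by apply/negbTE; apply: contra vvg => /eqP[->].
rewrite (bigD1 (Some y)) //= -[X in X <= _]addr0 lerD //.
  by apply: ler_wpM2l.
apply: sumr_ge0 => z _; apply: mulr_ge0; first exact: P_ge0.
apply: kk_ge0; exact: P_ge0.
Qed.

End Policy.
End Env.

Section Series.
Variable R : realType.
Local Open Scope ereal_scope.

Lemma ser_shift (f : nat -> \bar R) : (forall t, 0 <= f t) -> f 0%N = 0 ->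
  \sum_(t <oo) f t = \sum_(t <oo) f t.+1.
Proof.
move=> f0 fz; rewrite nneseries_recl // fz add0e -nneseries_addn //.
by apply: eq_eseriesr => i _; rewrite addn1.
Qed.

Lemma ser_swap (I : finType) (g : I -> nat -> R) : (forall v t, (0 <= g v t)%R) ->
  \sum_(t <oo) (\sum_(v : I) g v t)%:E = \sum_(v : I) \sum_(t <oo) (g v t)%:E.
Proof.
move=> g0; under eq_eseriesr do rewrite -sumEFin.
by apply: nneseries_sum => v t _; rewrite lee_fin.
Qed.

Lemma ser_ind (c : R) t0 : (0 <= c)%R ->
  \sum_(t <oo) ((t == t0)%:R * c)%:E = c%:E.
Proof.
move=> c0; rewrite (@nneseriesD1 _ _ t0) //; last first.
  by move=> k _; rewrite lee_fin mulr_ge0.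
rewrite eqxx mul1r eseries0 ?adde0 // => i _ /andP[_ /negbTE ->].
by rewrite mul0r.
Qed.

Lemma ser_scale (c : R) (f : nat -> R) : (0 <= c)%R -> (forall t, 0 <= f t)%R ->
  \sum_(t <oo) (c * f t)%:E = c%:E * \sum_(t <oo) (f t)%:E.
Proof.
move=> c0 f0; under eq_eseriesr do rewrite EFinM.
by apply: nneseriesZl => i _; rewrite lee_fin.
Qed.

Lemma ser_le1 (f : nat -> R) : (forall t, 0 <= f t)%R ->
  (forall N, \sum_(t < N) f t <= 1)%R -> \sum_(t <oo) (f t)%:E <= 1.
Proof.
move=> f0 fN; apply: lime_le.
  by apply: is_cvg_nneseries => n _ _; rewrite lee_fin.
near=> n; rewrite sumEFin lee_fin big_mkord; exact: fN.
Unshelve. all: by end_near.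
Qed.

End Series.

Section Opt.
Variables (T : finType) (e : rel T) (vg : T) (R : realType).
Hypothesis Hreach : forall v : T, connect e v vg.
Variable Rw : T -> R.
Hypothesis HRw : forall v, 0 < Rw v.
Local Notation E := (env_rel e vg).
Local Notation Z := (\sum_(v : T) Rw v).
Local Notation d v := (dist e v vg).

Lemma Z_gt0 : 0 < Z.
Proof.
rewrite (bigD1 vg) //=; have := HRw vg.
have : 0 <= \sum_(i | i != vg) Rw i by apply: sumr_ge0 => i _; apply: ltW.
lra.
Qed.

Lemma pi_sum : \sum_(v : T) Rw v / Z = 1.
Proof. by rewrite -mulr_suml divff // gt_eqF // Z_gt0. Qed.

Lemma pi_gt0 v : 0 < Rw v / Z.
Proof. by rewrite divr_gt0 // Z_gt0. Qed.

Section WithPolicy.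
Variable P : option T -> option T -> R.
Hypothesis HP : backward_policy E (Some vg) P.
Hypothesis HPi : forall v, P (Some v) None = Rw v / Z.

Let Pge0 := P_ge0 HP.
Let P0 := P_s0 HP.
Lemma Psum' x : x != Some vg -> \sum_y P y x = 1.
Proof. by case: HP => _ _ H; apply: H. Qed.

Lemma kkP_ge0 t x : 0 <= kk P (Some vg) t x.
Proof. exact: kk_ge0. Qed.

Lemma PNN : P None None = 0.
Proof. by case: HP => _ H _; apply: H. Qed.

Lemma hit_eq t : hit_prob P (Some vg) None t =
  if t is t'.+1 then \sum_(v : T) P (Some v) None * kk P (Some vg) t' (Some v) else 0.
Proof.
rewrite /hit_prob (Hk P0); case: t => [|t] //=.
by rewrite (sum_option _ vg) PNN mul0r add0r.
Qed.

Lemma hit_ge0 t : 0 <= hit_prob P (Some vg) None t.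
Proof. rewrite /hit_prob (Hk P0); exact: kkP_ge0. Qed.

Lemma A_eq : (\sum_(t <oo) (hit_prob P (Some vg) None t)%:E)%E =
  (\sum_(v : T) (Rw v / Z)%:E * \sum_(t <oo) (kk P (Some vg) t (Some v))%:E)%E.
Proof.
rewrite ser_shift; last by rewrite hit_eq.
  2: by move=> t; rewrite lee_fin hit_ge0.
under eq_eseriesr do rewrite hit_eq.
rewrite ser_swap; last by move=> v t; rewrite mulr_ge0 // kkP_ge0.
apply: eq_bigr => v _; rewrite -ser_scale; last 2 first.
- exact: ltW (pi_gt0 v).
- by move=> t; exact: kkP_ge0.
by apply: eq_eseriesr => t _; rewrite HPi.
Qed.

Lemma B_eq : (\sum_(t <oo) ((t.-1)%:R * hit_prob P (Some vg) None t)%:E)%E =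
  (\sum_(v : T) (Rw v / Z)%:E * \sum_(t <oo) (t%:R * kk P (Some vg) t (Some v))%:E)%E.
Proof.
rewrite ser_shift; last by rewrite mul0r.
  2: by move=> t; rewrite lee_fin mulr_ge0 ?hit_ge0.
under eq_eseriesr do rewrite hit_eq /= mulr_sumr.
rewrite ser_swap; last by move=> v t; rewrite mulrCA mulr_ge0 // ?mulr_ge0 // kkP_ge0.
apply: eq_bigr => v _; rewrite -ser_scale; last 2 first.
- exact: ltW (pi_gt0 v).
- by move=> t; rewrite mulr_ge0 // kkP_ge0.
by apply: eq_eseriesr => t _; rewrite HPi mulrCA.
Qed.

Lemma M_le1 v : (\sum_(t <oo) (kk P (Some vg) t (Some v))%:E <= 1)%E.
Proof.
apply: ser_le1; first by move=> t; exact: kkP_ge0.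
by move=> N; apply: kk_sum_le1 => //; exact: Psum'.
Qed.

Hypothesis Hfin : (expected_ntau P (Some vg) None < +oo)%E.

Lemma A1 : (\sum_(t <oo) (hit_prob P (Some vg) None t)%:E)%E = 1%E.
Proof. by move: Hfin; rewrite /expected_ntau; case: eqP => // _; rewrite ltxx. Qed.

Lemma M1 v : (\sum_(t <oo) (kk P (Some vg) t (Some v))%:E)%E = 1%E.
Proof.
pose M u := (\sum_(t <oo) (kk P (Some vg) t (Some u))%:E)%E.
have M0 u : (0 <= M u)%E by apply: nneseries_ge0 => n _ _; rewrite lee_fin kkP_ge0.
have Mf u : M u = (fine (M u))%:E.
  rewrite fineK // ge0_fin_numE //; exact: (le_lt_trans (M_le1 u) (ltry _)).
have m1 u : fine (M u) <= 1 by rewrite -lee_fin -Mf; exact: M_le1.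
have m0 u : 0 <= fine (M u) by rewrite -lee_fin -Mf.
have := A1; rewrite A_eq.
rewrite (eq_bigr (fun u => ((Rw u / Z) * fine (M u))%:E)); last first.
  by move=> u _; rewrite -/(M u) {1}Mf EFinM.
rewrite sumEFin => /eqP; rewrite eqe => /eqP Hs.
have H0 : \sum_(u : T) (Rw u / Z) * (1 - fine (M u)) = 0.
  rewrite (eq_bigr (fun u => Rw u / Z - Rw u / Z * fine (M u))); last first.
    by move=> u _; rewrite mulrBr mulr1.
  by rewrite sumrB pi_sum Hs subrr.
have := psumr_eq0P _ H0 => /(_ _) H.
have /H : forall i : T, true -> 0 <= Rw i / Z * (1 - fine (M i)).
  by move=> i _; rewrite mulr_ge0 ?subr_ge0 // ltW // pi_gt0.
move=> /(_ v isT) /eqP; rewrite mulf_eq0 gt_eqF ?pi_gt0 //= subr_eq0 => /eqP h.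
by rewrite -/(M v) Mf -h.
Qed.

Lemma C_ge v t0 :
  (((d v)%:R + (t0%:R - (d v)%:R) * kk P (Some vg) t0 (Some v))%:E <=
   \sum_(t <oo) (t%:R * kk P (Some vg) t (Some v))%:E)%E.
Proof.
set k := kk P (Some vg).
have kd t : k t (Some v) != 0 -> (d v <= t)%N by apply: kk_dist.
set c := (t0%:R - (d v)%:R) * k t0 (Some v).
have c0 : 0 <= c.
  rewrite /c; have [->|kn] := eqVneq (k t0 (Some v)) 0; first by rewrite mulr0.
  by rewrite mulr_ge0 ?kkP_ge0 // subr_ge0 ler_nat kd.
apply: (@le_trans _ _ (\sum_(t <oo) ((d v)%:R * k t (Some v) + (t == t0)%:R * c)%:E)%E).
  rewrite (eq_eseriesr (fun t _ => EFinD _ _)) nneseriesD; last 2 first.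
  - by move=> i _ _; rewrite lee_fin mulr_ge0 ?kkP_ge0.
  - by move=> i _ _; rewrite lee_fin mulr_ge0.
  rewrite ser_ind // ser_scale // ?M1 ?mule1 //; last by move=> t; exact: kkP_ge0.
apply: lee_nneseries.
  by move=> i _ _; rewrite lee_fin; apply: addr_ge0; apply: mulr_ge0 => //; exact: kkP_ge0.
move=> t _; rewrite lee_fin.
have [->|tt0] := eqVneq t t0.
  by rewrite mul1r /c -mulrDl addrC subrK.
rewrite mul0r addr0.
have [->|kn] := eqVneq (k t (Some v)) 0; first by rewrite !mulr0.
by apply: ler_wpM2r; rewrite ?kkP_ge0 // ler_nat kd.
Qed.

Lemma LB (tau : T -> nat) :
  ((\sum_(v : T) (Rw v / Z) * ((d v)%:R +
      ((tau v)%:R - (d v)%:R) * kk P (Some vg) (tau v) (Some v)))%:E <=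
   expected_ntau P (Some vg) None)%E.
Proof.
rewrite /expected_ntau A1 eqxx B_eq -sumEFin; apply: lee_sum => v _.
rewrite EFinM; apply: lee_wpmul2l; first by rewrite lee_fin ltW // pi_gt0.
exact: C_ge.
Qed.

End WithPolicy.
End Opt.

Section QPol.
Variables (T : finType) (e : rel T) (vg : T) (R : realType).
Hypothesis Hreach : forall v : T, connect e v vg.
Variable Rw : T -> R.
Hypothesis HRw : forall v, 0 < Rw v.
Local Notation E := (env_rel e vg).
Local Notation Z := (\sum_(v : T) Rw v).
Local Notation d v := (dist e v vg).

Definition nxt (u : T) : option T :=
  [pick w | e u w && (dist e w vg == (dist e u vg).-1)].

Lemma nxt_spec u w : nxt u = Some w -> e u w /\ d w = (d u).-1.
Proof. by rewrite /nxt; case: pickP => // w' /andP[euw /eqP dw] [<-]. Qed.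

Lemma nxt_some u : u != vg -> exists w, nxt u = Some w.
Proof.
move=> uvg; rewrite /nxt; case: pickP => [w _|H]; first by exists w.
have [w [euw dw]] := dist_next (Hreach u) uvg.
by move: (H w); rewrite euw dw eqxx.
Qed.

Definition Qp (y x : option T) : R :=
  match x, y with
  | None, Some v => Rw v / Z
  | Some u, Some w => if (u != vg) && (nxt u == Some w) then 1 else 0
  | _, _ => 0
  end.

Lemma Q_policy : backward_policy E (Some vg) Qp.
Proof.
split.
- case => [w|] [u|] //=; first by case: ifP.
  by rewrite divr_ge0 // ?ltW // Z_gt0.
- case => [w|] [u|] //=.
  case: ifP => // /andP[uvg /eqP/nxt_spec [euw _]].
  by rewrite euw uvg.
- case => [u|] /= H.
    have uvg : u != vg by apply: contra H => /eqP ->.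
    have [w0 hw0] := nxt_some uvg.
    rewrite (sum_option _ vg) /= add0r (bigD1 w0) //= uvg hw0 eqxx /=.
    rewrite big1 ?addr0 // => w ww0 /=.
    by rewrite (inj_eq (@Some_inj _)) eq_sym (negbTE ww0).
  rewrite (sum_option _ vg) /= add0r; exact: pi_sum.
Qed.

Lemma kkQ t v : kk Qp (Some vg) t (Some v) = (t == d v)%:R.
Proof.
elim: t v => [|t IH] v /=.
  rewrite (inj_eq (@Some_inj _)).
  have [->|nv] := eqVneq v vg; first by rewrite dist0.
  suff : (0 != d v) by move/negbTE ->.
  by apply/eqP => /esym/(dist_eq0 (Hreach v)) /eqP; rewrite (negbTE nv).
rewrite (inj_eq (@Some_inj _)).
have [->|nv] := eqVneq v vg; first by rewrite dist0.
have [w0 hw0] := nxt_some nv.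
have [_ dw0] := nxt_spec hw0.
have dpos : (0 < d v)%N.
  rewrite lt0n; apply/eqP => /(dist_eq0 (Hreach v)) /eqP; rewrite (negbTE nv) //.
rewrite (sum_option _ vg) /= mul0r add0r (bigD1 w0) //= hw0 eqxx /= mul1r IH.
rewrite big1 ?addr0; last first.
  move=> w ww0; rewrite /= (inj_eq (@Some_inj _)) eq_sym (negbTE ww0) mul0r //.
by rewrite dw0; case: (d v) dpos.
Qed.

Lemma Q_A : (\sum_(t <oo) (hit_prob Qp (Some vg) None t)%:E)%E = 1%E.
Proof.
rewrite (A_eq HRw Q_policy) //.
rewrite (eq_bigr (fun v => (Rw v / Z)%:E)); last first.
  move=> v _; under eq_eseriesr do rewrite kkQ -[X in X%:E]mulr1.
  by rewrite ser_ind // mule1.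
by rewrite sumEFin pi_sum.
Qed.

Lemma Q_val : expected_ntau Qp (Some vg) None =
  ((\sum_(v : T) Rw v / Z * (d v)%:R)%:E)%E.
Proof.
rewrite /expected_ntau Q_A eqxx (B_eq HRw Q_policy) // -sumEFin.
apply: eq_bigr => v _; rewrite [in RHS]EFinM; congr (mule _ _).
under eq_eseriesr do rewrite kkQ.
rewrite -(ser_ind (d v) (ler0n _ _)).
apply: eq_eseriesr => t _; by case: eqP => [->|]; rewrite ?mulr0 ?mul0r ?mulr1 ?mul1r.
Qed.

Lemma Q_adm : [/\ backward_policy E (Some vg) Qp,
        forall v, Qp (Some v) None = Rw v / Z &
        (expected_ntau Qp (Some vg) None < +oo)%E].
Proof. by split; [exact: Q_policy | by [] | rewrite Q_val ltry]. Qed.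

End QPol.

Local Close Scope ring_scope.
Unset Implicit Arguments.

Theorem mainTheorem5 (R : realType) (T : finType) (e : rel T) (vg : T)
  (Hreach : forall v : T, connect e v vg) :
  [/\ gfn_env (env_rel e vg) (Some vg) None
      /\ terminals (env_rel e vg) None = [set Some v | v in T],
      forall v : T, ell (env_rel e vg) (Some vg) (Some v) = dist e v vg,
      forall (Rw : T -> R), (forall v, (0 < Rw v)%R) ->
      forall P : option T -> option T -> R, optimal_policy e vg Rw P ->
      forall (v : T) (p : seq T),
        last v p = vg -> vg \notin take (size p).-1 p ->
        (0 < path_weight P (Some v) (map Some p))%R ->
        path e v p /\ size p = dist e v vg
    & forall P : option T -> option T -> R,
        optimal_policy e vg (fun _ => 1%R) P ->
        expected_ntau P (Some vg) None
        = (((\sum_(v : T) dist e v vg)%:R / #|T|%:R)%R)%:E].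
Proof.
split.
- exact: env_gfn Hreach.
- by move=> v; rewrite /ell; exact: ell_eq Hreach v.
- move=> Rw HRw P; rewrite /optimal_policy /= => -[[HP HPi Hfin] Hopt] v p lp _ pos.
  have [pp le] := weight_kk HP pos lp.
  split => //.
  have Hle : (dist e v vg <= size p)%N by have := dist_path pp; rewrite lp.
  apply/eqP; rewrite eqn_leq Hle andbT leqNgt; apply/negP => lt.
  have Hup := Hopt _ (Q_adm Hreach HRw).
  rewrite (Q_val Hreach HRw) in Hup.
  pose tau u := if u == v then size p else dist e u vg.
  have Hlo := LB Hreach HRw HP HPi Hfin tau.
  have := le_trans Hlo Hup; rewrite lee_fin.
  set Z := (\sum_(v : T) Rw v)%R.
  rewrite (bigD1 v) //= [X in (_ <= X)%R](bigD1 v) //=.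
  have Es : (\sum_(i | i != v) Rw i / Z * ((dist e i vg)%:R +
      ((tau i)%:R - (dist e i vg)%:R) * kk P (Some vg) (tau i) (Some i)) =
      \sum_(i | i != v) Rw i / Z * (dist e i vg)%:R)%R.
    by apply: eq_bigr => u /negbTE uv; rewrite /tau uv subrr mul0r addr0.
  rewrite Es /tau eqxx.
  have hpos : (0 < Rw v / Z * (((size p)%:R - (dist e v vg)%:R) *
        kk P (Some vg) (size p) (Some v)))%R.
    apply: mulr_gt0; first exact: pi_gt0.
    apply: mulr_gt0; first by rewrite subr_gt0 ltr_nat.
    exact: lt_le_trans pos le.
  rewrite mulrDr; lra.
- move=> P; rewrite /optimal_policy /= => -[[HP HPi Hfin] Hopt].
  have HRw1 : forall v : T, (0 < (fun _ : T => 1%R : R) v)%R by move=> v; exact: ltr01.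
  have Hup := Hopt _ (Q_adm Hreach HRw1).
  rewrite (Q_val Hreach HRw1) in Hup.
  have Hlo := LB Hreach HRw1 HP HPi Hfin (fun u => dist e u vg).
  have HZ : (\sum_(v : T) (1 : R) = #|T|%:R)%R by rewrite sumr_const.
  rewrite (eq_bigr (fun v => (1 / (\sum_(v : T) (1 : R)) * (dist e v vg)%:R)%R)) in Hlo; last first.
    by move=> u _; rewrite subrr mul0r addr0.
  have -> : (((\sum_(v : T) dist e v vg)%:R / #|T|%:R)%R =
            \sum_(v : T) (1 / (\sum_(v : T) (1 : R)) * (dist e v vg)%:R))%R.
    by rewrite HZ natr_sum mulr_suml; apply: eq_bigr => u _; rewrite mul1r mulrC.
  by apply/le_anti; rewrite Hlo Hup.
Qed.
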